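(* Let $v_1,\dots,v_n$ be distinct real numbers, $s_1,\dots,s_n\in[0,1)$, and $\gamma\in[0,1]$. Then there exist $t\in\mathbb{R}$ and $\alpha\in[0,1]$ such that, for the sector $S=S_{\alpha,\alpha+\gamma}$ of aperture $\gamma$, $$\big|N_S(s_1+v_1t,\dots,s_n+v_nt)-\gamma n\big|\ \ge\ \sqrt{(\gamma-\gamma^2)n}.$$ In particular, there exists $t\in\mathbb{R}$ with $B(s_1+v_1t,\dots,s_n+v_nt)\ge\sqrt n/2$.
   Context: For $r\in\mathbb{R}$, $\{r\}:=r-\lfloor r\rfloor$. For $\alpha\in\mathbb{R}$, $\gamma\in[0,1]$, the sector $S_{\alpha,\alpha+\gamma}:=\{x\in[0,1]:\{x-\alpha\}\le\gamma\}$, of aperture $\gamma$. For a sector $S$ and $x_1,\dots,x_n\in\mathbb{R}$, $N_S(x_1,\dots,x_n):=|\{i:\{x_i\}\in S\}|$. For $r_1,\dots,r_n\in\mathbb{R}$, the bias is $B(r_1,\dots,r_n):=\sup_{0\le a\le b\le1}\big|\,|\{i:\{r_i\}\in[a,b]\}|-n(b-a)\big|$. *)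

(* Defs.v *)
From Stdlib Require Import Reals Lra Lia List.
Import ListNotations.
Open Scope R_scope.

(* floor r = up r - 1, since up r is the unique integer with r < up r <= r + 1 *)
Definition floorR (r : R) : R := IZR (up r) - 1.
Definition frac (r : R) : R := r - floorR r.

Definition in_sector (alpha gamma x : R) : bool :=
  if Rle_dec 0 x then
    if Rle_dec x 1 then
      if Rle_dec (frac (x - alpha)) gamma then true else false
    else false
  else false.

Definition N_sector (alpha gamma : R) (x : nat -> R) (n : nat) : nat :=
  length (filter (fun i => in_sector alpha gamma (frac (x i))) (seq 0 n)).

Definition count_in (a b : R) (r : nat -> R) (n : nat) : nat :=
  length (filter (fun i =>
     if Rle_dec a (frac (r i)) then
       if Rle_dec (frac (r i)) b then true else false
     else false) (seq 0 n)).

Definition bias_values (r : nat -> R) (n : nat) (y : R) : Prop :=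
  exists a b, 0 <= a /\ a <= b /\ b <= 1 /\
    y = Rabs (INR (count_in a b r n) - INR n * (b - a)).

Definition is_bias (r : nat -> R) (n : nat) (B : R) : Prop :=
  is_lub (bias_values r n) B.

(* Main.v *)
Require Import Defs.
From Stdlib Require Import Reals Lra Lia List Classical ZArith.
From Coquelicot Require Import Coquelicot.
Open Scope R_scope.

Lemma floorR_spec x : floorR x <= x < floorR x + 1.
Proof. unfold floorR; destruct (archimed x); lra. Qed.

Lemma floorR_IZR x : floorR x = IZR (up x - 1).
Proof. unfold floorR; rewrite minus_IZR; reflexivity. Qed.

Lemma floorR_unique x z : IZR z <= x < IZR z + 1 -> floorR x = IZR z.
Proof.
  intros H. unfold floorR.
  rewrite <- (tech_up x (z+1)); rewrite plus_IZR; [ring|lra|lra].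
Qed.

Lemma frac_range x : 0 <= frac x < 1.
Proof. unfold frac; destruct (floorR_spec x); lra. Qed.

Lemma frac_shift x z : frac (x + IZR z) = frac x.
Proof.
  unfold frac. rewrite (floorR_unique (x + IZR z) (up x - 1 + z)).
  - rewrite plus_IZR, <- floorR_IZR; ring.
  - rewrite plus_IZR, <- floorR_IZR. destruct (floorR_spec x); lra.
Qed.

Lemma frac_id u : 0 <= u < 1 -> frac u = u.
Proof. intros H; unfold frac; rewrite (floorR_unique u 0); simpl; lra. Qed.

Lemma frac_neg u : -1 <= u < 0 -> frac u = u + 1.
Proof. intros H; unfold frac; rewrite (floorR_unique u (-1)); simpl; lra. Qed.

Lemma isR_const a b (c : R) : is_RInt (fun _ => c) a b ((b-a)*c).
Proof. exact (is_RInt_const a b c). Qed.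
Lemma isR_chasles (f : R -> R) a b c (l1 l2 : R) :
  is_RInt f a b l1 -> is_RInt f b c l2 -> is_RInt f a c (l1 + l2).
Proof. intros; exact (is_RInt_Chasles f a b c l1 l2 H H0). Qed.
Lemma isR_ext (f g : R -> R) a b (l : R) :
  (forall x, Rmin a b < x < Rmax a b -> f x = g x) -> is_RInt f a b l -> is_RInt g a b l.
Proof. apply is_RInt_ext. Qed.
Lemma isR_eqv (f : R -> R) a b (l l' : R) : l = l' -> is_RInt f a b l -> is_RInt f a b l'.
Proof. intros ->; auto. Qed.
Lemma isR_bounds (f : R -> R) a b a' b' (l : R) : a = a' -> b = b' -> is_RInt f a b l -> is_RInt f a' b' l.
Proof. intros -> ->; auto. Qed.
Lemma isR_plus (f g : R -> R) a b (l1 l2 : R) :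
  is_RInt f a b l1 -> is_RInt g a b l2 -> is_RInt (fun x => f x + g x) a b (l1 + l2).
Proof. intros; exact (is_RInt_plus f g a b l1 l2 H H0). Qed.
Lemma isR_scal (f : R -> R) a b k (l : R) :
  is_RInt f a b l -> is_RInt (fun x => k * f x) a b (k * l).
Proof. intros; exact (is_RInt_scal f a b k l H). Qed.
Lemma isR_swap (f : R -> R) a b (l : R) : is_RInt f b a l -> is_RInt f a b (- l).
Proof. intros; exact (is_RInt_swap f a b l H). Qed.
Lemma isR_point (f : R -> R) a : is_RInt f a a 0.
Proof. exact (is_RInt_point f a). Qed.
Lemma isR_lin (f : R -> R) u v a b (l : R) :
  is_RInt f (u*a+v) (u*b+v) l -> is_RInt (fun y => u * f (u*y+v)) a b l.
Proof. intros; exact (is_RInt_comp_lin f u v a b l H). Qed.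

Lemma open_lr a b x : a <= b -> Rmin a b < x < Rmax a b -> a < x < b.
Proof. intros H; rewrite Rmin_left, Rmax_right; auto. Qed.

Fixpoint sumR (n : nat) (f : nat -> R) : R :=
  match n with O => 0 | S k => sumR k f + f k end.

Lemma sumR_ext n f g : (forall i, (i < n)%nat -> f i = g i) -> sumR n f = sumR n g.
Proof. induction n; simpl; intros; auto. rewrite IHn by (intros; apply H; lia). rewrite H by lia. auto. Qed.

Lemma sumR_le n f g : (forall i, (i < n)%nat -> f i <= g i) -> sumR n f <= sumR n g.
Proof. induction n; simpl; intros. lra. assert (f n <= g n) by (apply H; lia).
  assert (sumR n f <= sumR n g) by (apply IHn; intros; apply H; lia). lra. Qed.

Lemma sumR_plus n f g : sumR n (fun i => f i + g i) = sumR n f + sumR n g.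
Proof. induction n; simpl; [ring|rewrite IHn; ring]. Qed.

Lemma sumR_mult_l n c f : c * sumR n f = sumR n (fun i => c * f i).
Proof. induction n; simpl; [ring|rewrite <- IHn; ring]. Qed.

Lemma sumR_mult_r n c f : sumR n f * c = sumR n (fun i => f i * c).
Proof. induction n; simpl; [ring|rewrite <- IHn; ring]. Qed.

Lemma sumR_const n c : sumR n (fun _ => c) = c * INR n.
Proof. induction n; simpl sumR; [simpl; ring|rewrite IHn, S_INR; ring]. Qed.

Lemma sumR_sq n a : sumR n a * sumR n a = sumR n (fun i => sumR n (fun j => a i * a j)).
Proof.
  rewrite sumR_mult_r. apply sumR_ext. intros i _. apply sumR_mult_l.
Qed.

Lemma sumR_zero n : sumR n (fun _ => 0) = 0.
Proof. rewrite sumR_const; ring. Qed.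

Lemma sumR_delta n i A : (i < n)%nat -> sumR n (fun j => if Nat.eq_dec i j then A else 0) = A.
Proof.
  induction n; intros Hi; [lia|]. simpl.
  destruct (Nat.eq_dec i n).
  - subst. rewrite (sumR_ext _ _ (fun _ => 0)), sumR_zero; [ring|].
    intros j Hj; destruct Nat.eq_dec; [lia|auto].
  - rewrite IHn by lia. ring.
Qed.

Lemma isR_sum n (F : nat -> R -> R) (L : nat -> R) a b :
  (forall i, (i < n)%nat -> is_RInt (F i) a b (L i)) ->
  is_RInt (fun x => sumR n (fun i => F i x)) a b (sumR n L).
Proof.
  induction n; intros HF; simpl.
  - apply (isR_eqv _ _ _ ((b - a) * 0)); [ring|apply isR_const].
  - apply isR_plus. apply IHn; intros; apply HF; lia. apply HF; lia.
Qed.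

Lemma len_filter (p : nat -> bool) n :
  INR (length (filter p (List.seq 0 n))) = sumR n (fun i => if p i then 1 else 0).
Proof.
  induction n; [reflexivity|].
  rewrite seq_S, filter_app, length_app, plus_INR, IHn. simpl.
  destruct (p n); simpl; ring.
Qed.
Section G.
Variable g : R.
Hypothesis hg : 0 <= g <= 1.

Definition h (u : R) : R := if Rle_dec (frac u) g then 1 else 0.
Definition H (x : R) : R := g * floorR x + Rmin (frac x) g.

Lemma h_shift u z : h (u + IZR z) = h u.
Proof. unfold h; rewrite frac_shift; reflexivity. Qed.

Lemma h_sq u : h u * h u = h u.
Proof. unfold h; destruct Rle_dec; ring. Qed.

Lemma h_bound u : 0 <= h u <= 1.
Proof. unfold h; destruct Rle_dec; lra. Qed.

Lemma H_cell z x : IZR z <= x <= IZR z + 1 -> H x = g * IZR z + Rmin (x - IZR z) g.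
Proof.
  intros Hx. unfold H. destruct (Rlt_or_le x (IZR z + 1)).
  - unfold frac; rewrite (floorR_unique x z) by lra. reflexivity.
  - assert (x = IZR (z+1)) by (rewrite plus_IZR; simpl; lra).
    unfold frac. rewrite (floorR_unique x (z+1)) by (rewrite plus_IZR; simpl; lra).
    rewrite H1, !plus_IZR. simpl.
    replace (IZR z + 1 - (IZR z + 1)) with 0 by ring.
    replace (IZR z + 1 - IZR z) with 1 by ring.
    rewrite Rmin_left by lra. rewrite Rmin_right by lra. ring.
Qed.

Lemma h_int_cell z a b : IZR z <= a <= b -> b <= IZR z + 1 ->
  is_RInt h a b (H b - H a).
Proof.
  intros Ha Hb.
  set (m := Rmax a (Rmin b (IZR z + g))).
  assert (Hm1 : a <= m) by (unfold m; apply Rmax_l).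
  assert (Hm2 : m <= b) by (unfold m; apply Rmax_lub; [lra| apply Rmin_l]).
  assert (I1 : is_RInt h a m ((m - a) * 1)).
  { apply (isR_ext (fun _ => 1)); [|apply isR_const].
    intros x Hx. apply open_lr in Hx; auto.
    unfold h, frac. rewrite (floorR_unique x z) by lra.
    destruct Rle_dec; auto. exfalso. apply n.
    assert (x < IZR z + g); [|lra].
    unfold m in Hx. destruct (Rle_dec a (Rmin b (IZR z + g))).
    + rewrite Rmax_right in Hx by lra. pose proof (Rmin_r b (IZR z + g)); lra.
    + rewrite Rmax_left in Hx by lra. lra. }
  assert (I2 : is_RInt h m b ((b - m) * 0)).
  { apply (isR_ext (fun _ => 0)); [|apply isR_const].
    intros x Hx. apply open_lr in Hx; auto.
    unfold h, frac. rewrite (floorR_unique x z) by lra.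
    destruct Rle_dec; auto. exfalso.
    assert (IZR z + g < x); [|lra].
    unfold m in Hx.
    destruct (Rle_dec b (IZR z + g)).
    - rewrite Rmin_left in Hx by lra. pose proof (Rmax_r a b). lra.
    - rewrite Rmin_right in Hx by lra. pose proof (Rmax_r a (IZR z + g)). lra. }
  eapply isR_eqv; [|exact (isR_chasles _ _ _ _ _ _ I1 I2)].
  rewrite (H_cell z a) by lra. rewrite (H_cell z b) by lra.
  unfold m. unfold Rmax, Rmin.
  repeat destruct Rle_dec; lra.
Qed.

Lemma h_int_z (k : nat) : forall z b, IZR z <= b <= IZR z + INR k ->
  is_RInt h (IZR z) b (H b - H (IZR z)).
Proof.
  induction k as [|k IH]; intros z b Hb.
  - simpl in Hb. replace b with (IZR z) by lra.
    apply (isR_eqv _ _ _ 0); [ring|apply isR_point].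
  - destruct (Rle_dec b (IZR z + 1)).
    + apply (h_int_cell z); lra.
    + assert (I1 := h_int_cell z (IZR z) (IZR z + 1) ltac:(lra) ltac:(lra)).
      assert (I2 := IH (z+1)%Z b).
      rewrite plus_IZR in I2. simpl in I2. rewrite S_INR in Hb.
      specialize (I2 ltac:(lra)).
      eapply isR_eqv; [|exact (isR_chasles _ _ _ _ _ _ I1 I2)]. ring.
Qed.

Lemma h_int_le a b : a <= b -> is_RInt h a b (H b - H a).
Proof.
  intros Hab. set (z := (up a - 1)%Z).
  assert (Hz : IZR z <= a < IZR z + 1).
  { unfold z; rewrite <- floorR_IZR; apply floorR_spec. }
  destruct (Rle_dec b (IZR z + 1)).
  - apply (h_int_cell z); lra.
  - assert (I1 := h_int_cell z a (IZR z + 1) ltac:(lra) ltac:(lra)).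
    set (k := Z.to_nat (up (b - (IZR z + 1)))).
    assert (Hk : b - (IZR z + 1) <= INR k).
    { unfold k. destruct (archimed (b - (IZR z + 1))) as [A1 A2].
      rewrite INR_IZR_INZ, Z2Nat.id. lra.
      apply le_IZR. lra. }
    assert (I2 := h_int_z k (z+1)%Z b).
    rewrite plus_IZR in I2. simpl in I2. specialize (I2 ltac:(lra)).
    eapply isR_eqv; [|exact (isR_chasles _ _ _ _ _ _ I1 I2)]. ring.
Qed.

Lemma h_int a b : is_RInt h a b (H b - H a).
Proof.
  destruct (Rle_dec a b). apply h_int_le; auto.
  eapply isR_eqv; [|apply isR_swap; apply h_int_le; lra]. ring.
Qed.



Definition G (w : R) : R := H (w + g) - H w.

Lemma per_shift (f : R -> R) (Hp : forall u z, f (u + IZR z) = f u) (I : R) :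
  is_RInt f 0 1 I -> forall c, is_RInt f c (c+1) I.
Proof.
  intros HI c. set (z := (up c - 1)%Z).
  assert (Hz : IZR z <= c < IZR z + 1).
  { unfold z; rewrite <- floorR_IZR; apply floorR_spec. }
  set (c' := c - IZR z).
  assert (E : ex_RInt f 0 1) by (exists I; exact HI).
  assert (E1 : ex_RInt f 0 c') by (apply (ex_RInt_Chasles_1 f 0 c' 1); [unfold c'; lra|auto]).
  assert (E2 : ex_RInt f c' 1) by (apply (ex_RInt_Chasles_2 f 0 c' 1); [unfold c'; lra|auto]).
  assert (I1 := RInt_correct f 0 c' E1).
  assert (I2 := RInt_correct f c' 1 E2).
  assert (HI' := isR_chasles f 0 c' 1 _ _ I1 I2).
  assert (EI : I = RInt f 0 c' + RInt f c' 1).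
  { rewrite <- (is_RInt_unique f 0 1 I HI). apply (is_RInt_unique f 0 1 _ HI'). }
  assert (J2 : is_RInt f c (IZR z + 1) (RInt f c' 1)).
  { apply (isR_ext (fun y => 1 * f (1 * y + - IZR z))).
    - intros x _. rewrite Rmult_1_l, Rmult_1_l.
      rewrite <- opp_IZR, Hp. reflexivity.
    - apply isR_lin. apply (isR_bounds f c' 1); [unfold c'; ring|ring|exact I2]. }
  assert (J1 : is_RInt f (IZR z + 1) (c + 1) (RInt f 0 c')).
  { apply (isR_ext (fun y => 1 * f (1 * y + - (IZR z + 1)))).
    - intros x _. rewrite Rmult_1_l, Rmult_1_l.
      replace (- (IZR z + 1)) with (IZR (- (z+1))) by (rewrite opp_IZR, plus_IZR; reflexivity).
      rewrite Hp. reflexivity.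
    - apply isR_lin. apply (isR_bounds f 0 c'); [ring|unfold c'; ring|exact I1]. }
  apply (isR_eqv f c (c+1) _ _ (eq_sym (eq_trans EI (Rplus_comm _ _)))).
  exact (isR_chasles _ _ _ _ _ _ J2 J1).
Qed.

Lemma frac_0 : frac 0 = 0.
Proof. apply frac_id; lra. Qed.

Lemma f01 w : is_RInt (fun u => h u * h (u + w)) 0 1 (G w).
Proof.
  assert (A : is_RInt (fun u => h (u + w)) 0 g (H (w + g) - H w)).
  { apply (isR_ext (fun y => 1 * h (1 * y + w))).
    - intros x _; rewrite !Rmult_1_l, Rplus_comm; reflexivity.
    - apply isR_lin. apply (isR_bounds h w (w+g)); [ring|ring|apply h_int]. }
  assert (A' : is_RInt (fun u => h u * h (u + w)) 0 g (H (w + g) - H w)).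
  { apply (isR_ext (fun u => h (u + w))); [|exact A].
    intros x Hx. apply open_lr in Hx; [|lra].
    unfold h at 2. rewrite frac_id by lra. destruct Rle_dec; [ring|lra]. }
  assert (B : is_RInt (fun u => h u * h (u + w)) g 1 ((1 - g) * 0)).
  { apply (isR_ext (fun _ => 0)); [|apply isR_const].
    intros x Hx. apply open_lr in Hx; [|lra].
    unfold h at 1. rewrite frac_id by lra. destruct Rle_dec; [lra|ring]. }
  apply (isR_eqv _ _ _ _ _ (ltac:(unfold G; ring) : (H (w+g) - H w) + (1 - g) * 0 = G w)).
  exact (isR_chasles _ _ _ _ _ _ A' B).
Qed.

Lemma pair_int a b : is_RInt (fun al => h (a - al) * h (b - al)) 0 1 (G (b - a)).
Proof.
  set (F := fun u => h u * h (u + (b - a))).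
  assert (Hp : forall u z, F (u + IZR z) = F u).
  { intros u z; unfold F.
    replace (u + IZR z + (b - a)) with ((u + (b-a)) + IZR z) by ring.
    rewrite !h_shift; reflexivity. }
  assert (P := per_shift F Hp _ (f01 (b - a)) (a - 1)).
  replace (a - 1 + 1) with a in P by ring.
  apply isR_swap in P.
  assert (Q := isR_lin F (-1) a 0 1 _ (isR_bounds F _ _ _ _ _ (ltac:(ring) : a = -1 * 0 + a) (ltac:(ring) : a - 1 = -1 * 1 + a) P)).
  apply (isR_scal _ _ _ (-1)) in Q.
  apply (isR_ext (fun y => -1 * (-1 * F (-1 * y + a)))).
  - intros x _. unfold F. replace (-1 * x + a + (b - a)) with (b - x) by ring.
    replace (-1 * x + a) with (a - x) by ring. ring.
  - eapply isR_eqv; [|exact Q]. ring.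
Qed.

Lemma H0 : H 0 = 0.
Proof. unfold H. rewrite frac_0. unfold floorR. rewrite <- (tech_up 0 1); simpl; try lra.
  rewrite Rmin_left; lra. Qed.

Lemma Hg : H g = g.
Proof.
  unfold H. destruct (Rlt_or_le g 1).
  - unfold frac. rewrite (floorR_unique g 0) by (simpl; lra). simpl.
    rewrite Rmin_left; lra.
  - assert (g = 1) by lra. subst. unfold frac. rewrite (floorR_unique 1 1) by (simpl; lra).
    simpl. rewrite Rmin_left; lra.
Qed.

Lemma G0 : G 0 = g.
Proof. unfold G. rewrite Rplus_0_l, Hg, H0. ring. Qed.

Lemma single_int a : is_RInt (fun al => h (a - al)) 0 1 g.
Proof.
  apply (isR_ext (fun al => h (a - al) * h (a - al))).
  - intros; apply h_sq.
  - apply (isR_eqv _ _ _ (G (a - a))).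
    + replace (a - a) with 0 by ring; apply G0.
    + apply pair_int.
Qed.

Lemma pairc_int a b : is_RInt (fun al => (h (a - al) - g) * (h (b - al) - g)) 0 1 (G (b - a) - g * g).
Proof.
  assert (I1 := pair_int a b).
  assert (I2 := isR_scal _ _ _ (-g) _ (single_int a)).
  assert (I3 := isR_scal _ _ _ (-g) _ (single_int b)).
  assert (I4 := isR_const 0 1 (g * g)).
  assert (I5 := isR_plus _ _ _ _ _ _ I1 I2).
  assert (I6 := isR_plus _ _ _ _ _ _ I3 I4).
  assert (I7 := isR_plus _ _ _ _ _ _ I5 I6).
  apply (isR_ext _ _ _ _ _ (fun x _ => (ltac:(ring) :
     (h (a - x) * h (b - x) + - g * h (a - x) + (- g * h (b - x) + g * g)) =
     (h (a - x) - g) * (h (b - x) - g)))).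
  eapply isR_eqv; [|exact I7]. ring.
Qed.

Definition Dx (x : nat -> R) n al := sumR n (fun i => h (x i - al) - g).
Definition Phi (x : nat -> R) n := sumR n (fun i => sumR n (fun j => G (x j - x i) - g * g)).

Lemma D2_int x n : is_RInt (fun al => Dx x n al * Dx x n al) 0 1 (Phi x n).
Proof.
  apply (isR_ext (fun al => sumR n (fun i => sumR n (fun j => (h (x i - al) - g) * (h (x j - al) - g))))).
  - intros al _. unfold Dx. rewrite sumR_sq. reflexivity.
  - apply isR_sum. intros i _. apply (isR_sum n (fun j al => (h (x i - al) - g) * (h (x j - al) - g))).
    intros j _. apply pairc_int.
Qed.

Lemma ex_alpha x n eps : eps > 0 -> exists al, 0 <= al <= 1 /\ Dx x n al * Dx x n al >= Phi x n - eps.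
Proof.
  intros He. apply NNPP. intros Hn.
  assert (Hlt : forall al, 0 < al < 1 -> Dx x n al * Dx x n al <= Phi x n - eps).
  { intros al Hal. destruct (Rle_dec (Dx x n al * Dx x n al) (Phi x n - eps)); auto.
    exfalso; apply Hn; exists al; split; [lra|lra]. }
  assert (L := is_RInt_le _ _ 0 1 _ _ ltac:(lra) (D2_int x n) (isR_const 0 1 (Phi x n - eps)) Hlt).
  lra.
Qed.

Definition P (u : R) : R := H u - g * u.

Lemma P_bound u : Rabs (P u) <= 1.
Proof.
  unfold P, H. assert (E : g * floorR u + Rmin (frac u) g - g * u = Rmin (frac u) g - g * frac u)
    by (unfold frac; ring).
  rewrite E. destruct (frac_range u). unfold Rmin; destruct Rle_dec;
  apply Rabs_le; split; nra.
Qed.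

Lemma h_abs x : Rabs (h x) <= 1.
Proof. destruct (h_bound x). apply Rabs_le; lra. Qed.

Lemma H_lip a b : Rabs (H b - H a) <= Rabs (b - a).
Proof.
  assert (X : norm (H b - H a) <= Rabs (b - a) * 1).
  { apply (norm_RInt_le_const_abs h a b _ 1); [|apply h_int]. intros x _. apply h_abs. }
  change (norm (H b - H a)) with (Rabs (H b - H a)) in X. lra.
Qed.

Lemma P_lip a b : Rabs (P b - P a) <= 2 * Rabs (b - a).
Proof.
  unfold P. replace (H b - g * b - (H a - g * a)) with ((H b - H a) + (- g) * (b - a)) by ring.
  eapply Rle_trans; [apply Rabs_triang|]. rewrite Rabs_mult.
  assert (Rabs (- g) <= 1) by (apply Rabs_le; lra).
  assert (X := H_lip a b). assert (0 <= Rabs (b - a)) by apply Rabs_pos. nra.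
Qed.

Lemma P_cont u : continuous P u.
Proof.
  apply continuity_pt_filterlim. intros eps He. exists (eps / 2). split; [lra|].
  intros y [_ Hy]. simpl in *. unfold R_dist in *.
  assert (X := P_lip u y). lra.
Qed.

Lemma P_ex a b : ex_RInt P a b.
Proof. apply (@ex_RInt_continuous R_CompleteNormedModule). intros; apply P_cont. Qed.

Lemma lin_int c e T : c <> 0 -> is_RInt (fun t => P (c * t + e)) 0 T (/ c * RInt P e (c * T + e)).
Proof.
  intros Hc.
  assert (I := RInt_correct P _ _ (P_ex e (c * T + e))).
  assert (I2 := isR_lin P c e 0 T _ (isR_bounds P _ _ _ _ _ (ltac:(ring) : e = c * 0 + e) eq_refl I)).
  apply (isR_scal _ _ _ (/ c)) in I2.
  apply (isR_ext _ _ _ _ _ (fun t _ => (ltac:(field; auto) : / c * (c * P (c * t + e)) = P (c * t + e)))).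
  exact I2.
Qed.

Lemma GP w : G w - g * g = P (w + g) - P w.
Proof. unfold G, P. ring. Qed.

Lemma pair_t c d T : c <> 0 -> exists V, is_RInt (fun t => G (c * t + d) - g * g) 0 T V /\ V >= - (2 / Rabs c).
Proof.
  intros Hc.
  assert (I1 := lin_int c (d + g) T Hc).
  assert (I2 := lin_int c d T Hc).
  assert (I3 := isR_plus _ _ _ _ _ _ I1 (isR_scal _ _ _ (-1) _ I2)).
  eexists; split.
  - apply (isR_ext _ _ _ _ _ (fun t _ => (ltac:(rewrite GP; replace (c * t + d + g) with (c * t + (d + g)) by ring; ring) :
      P (c * t + (d + g)) + -1 * P (c * t + d) = G (c * t + d) - g * g))).
    exact I3.
  - set (E := c * T + d).
    assert (C1 := RInt_Chasles P (d + g) E (E + g) (P_ex _ _) (P_ex _ _)).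
    assert (C2 := RInt_Chasles P d (d + g) E (P_ex _ _) (P_ex _ _)).
    change (plus ?a ?b) with (a + b) in C1, C2.
    replace (c * T + (d + g)) with (E + g) by (unfold E; ring).
    assert (B1 := abs_RInt_le_const P E (E + g) 1 ltac:(lra) (P_ex _ _) (fun t _ => P_bound t)).
    assert (B2 := abs_RInt_le_const P d (d + g) 1 ltac:(lra) (P_ex _ _) (fun t _ => P_bound t)).
    replace (/ c * RInt P (d + g) (E + g) + -1 * (/ c * RInt P d E))
      with (/ c * (RInt P E (E + g) - RInt P d (d + g))) by (rewrite <- C1, <- C2; ring).
    assert (Hb : Rabs (RInt P E (E + g) - RInt P d (d + g)) <= 2).
    { eapply Rle_trans; [apply Rabs_triang|]. rewrite Rabs_Ropp. nra. }
    assert (Hca : 0 < Rabs c) by (apply Rabs_pos_lt; auto).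
    assert (Rabs (/ c * (RInt P E (E + g) - RInt P d (d + g))) <= 2 / Rabs c).
    { rewrite Rabs_mult, Rabs_inv. unfold Rdiv. rewrite Rmult_comm.
      apply Rmult_le_compat_r; [left; apply Rinv_0_lt_compat; auto|auto]. }
    apply Rabs_le_between in H1 || (destruct (Rabs_le_between _ _ H1) as [X _]).
    all: try lra.
Qed.

Lemma ex_t n (s v : nat -> R) eps :
  (forall i j, (i < n)%nat -> (j < n)%nat -> i <> j -> v i <> v j) -> eps > 0 ->
  exists t, Phi (fun i => s i + v i * t) n >= (g - g * g) * INR n - eps.
Proof.
  intros hv He.
  set (C := sumR n (fun i => sumR n (fun j => if Nat.eq_dec i j then 0 else 2 / Rabs (v j - v i)))).
  assert (HC : 0 <= C).
  { apply Rle_trans with (sumR n (fun _ => 0)); [rewrite sumR_zero; lra|]. unfold C. apply sumR_le. intros i Hi.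
    apply Rle_trans with (sumR n (fun _ => 0)); [rewrite sumR_zero; lra|]. apply sumR_le. intros j Hj. destruct Nat.eq_dec; [lra|].
    unfold Rdiv. apply Rmult_le_pos; [lra|]. left; apply Rinv_0_lt_compat.
    apply Rabs_pos_lt. intros E; apply (hv j i); auto; lra. }
  set (T := (C + 1) / eps).
  assert (HT : 0 <= T) by (unfold T; apply Rmult_le_pos; [lra|left; apply Rinv_0_lt_compat; lra]).
  set (F := fun i j t => G ((s j + v j * t) - (s i + v i * t)) - g * g).
  assert (Hij : forall i j, (i < n)%nat -> (j < n)%nat ->
     exists V, is_RInt (F i j) 0 T V /\
       V >= (if Nat.eq_dec i j then T * (g - g * g) else 0)
            - (if Nat.eq_dec i j then 0 else 2 / Rabs (v j - v i))).
  { intros i j Hi Hj. destruct (Nat.eq_dec i j).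
    - subst. exists ((T - 0) * (g - g * g)). split; [|lra].
      apply (isR_ext (fun _ => g - g * g)); [|apply isR_const].
      intros t _. unfold F. replace (s j + v j * t - (s j + v j * t)) with 0 by ring.
      rewrite G0; ring.
    - destruct (pair_t (v j - v i) (s j - s i) T) as [V [IV BV]].
      + intros E. apply (hv j i); auto. lra.
      + exists V. split; [|lra].
        apply (isR_ext _ _ _ _ _ (fun t _ => (ltac:(unfold F; f_equal; f_equal; ring) :
          G ((v j - v i) * t + (s j - s i)) - g * g = F i j t))). exact IV. }
  assert (Hex : forall i j, (i < n)%nat -> (j < n)%nat -> is_RInt (F i j) 0 T (RInt (F i j) 0 T)).
  { intros i j Hi Hj. destruct (Hij i j Hi Hj) as [V [IV _]].
    apply (RInt_correct (V := R_CompleteNormedModule)). exists V; exact IV. }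
  assert (Hlb : forall i j, (i < n)%nat -> (j < n)%nat -> RInt (F i j) 0 T >=
       (if Nat.eq_dec i j then T * (g - g * g) else 0)
            - (if Nat.eq_dec i j then 0 else 2 / Rabs (v j - v i))).
  { intros i j Hi Hj. destruct (Hij i j Hi Hj) as [V [IV BV]].
    rewrite (is_RInt_unique _ _ _ _ IV). exact BV. }
  assert (Itot : is_RInt (fun t => Phi (fun i => s i + v i * t) n) 0 T
                  (sumR n (fun i => sumR n (fun j => RInt (F i j) 0 T)))).
  { apply isR_sum. intros i Hi. apply (isR_sum n (fun j t => F i j t)). intros j Hj. apply Hex; auto. }
  assert (Lb : sumR n (fun i => sumR n (fun j => RInt (F i j) 0 T)) >= T * (g - g * g) * INR n - C).
  { assert (X : sumR n (fun i => sumR n (fun j => RInt (F i j) 0 T)) >=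
         sumR n (fun i => sumR n (fun j => (if Nat.eq_dec i j then T * (g - g * g) else 0)
            + (-1) * (if Nat.eq_dec i j then 0 else 2 / Rabs (v j - v i))))).
    { apply Rle_ge, sumR_le. intros i Hi. apply sumR_le. intros j Hj. specialize (Hlb i j Hi Hj). lra. }
    assert (Y : sumR n (fun i => sumR n (fun j => (if Nat.eq_dec i j then T * (g - g * g) else 0)
            + (-1) * (if Nat.eq_dec i j then 0 else 2 / Rabs (v j - v i)))) =
          sumR n (fun i => T * (g - g * g) + (-1) * sumR n (fun j => if Nat.eq_dec i j then 0 else 2 / Rabs (v j - v i)))).
    { apply sumR_ext. intros i Hi. rewrite sumR_plus, sumR_delta, <- sumR_mult_l by auto. reflexivity. }
    rewrite Y, sumR_plus, sumR_const, <- sumR_mult_l in X. fold C in X. lra. }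
  apply NNPP. intros Hn.
  assert (Hlt : forall t, 0 < t < T -> Phi (fun i => s i + v i * t) n <= (g - g * g) * INR n - eps).
  { intros t _. destruct (Rle_dec (Phi (fun i => s i + v i * t) n) ((g - g * g) * INR n - eps)); auto.
    exfalso; apply Hn; exists t; lra. }
  assert (L := is_RInt_le _ _ 0 T _ _ HT Itot (isR_const 0 T _) Hlt).
  assert (TE : T * eps = C + 1) by (unfold T; field; lra).
  nra.
Qed.
End G.

Lemma frac_frac y al : frac (frac y - al) = frac (y - al).
Proof.
  replace (frac y - al) with ((y - al) + IZR (- (up y - 1))).
  - apply frac_shift.
  - unfold frac. rewrite floorR_IZR, opp_IZR. ring.
Qed.

Lemma in_sector_h al g y : (if in_sector al g (frac y) then 1 else 0) = h g (y - al).
Proof.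
  unfold in_sector, h. destruct (frac_range y).
  destruct (Rle_dec 0 (frac y)); [|lra]. destruct (Rle_dec (frac y) 1); [|lra].
  rewrite frac_frac. destruct Rle_dec; reflexivity.
Qed.

Lemma N_sum al g x n : INR (N_sector al g x n) = sumR n (fun i => h g (x i - al)).
Proof.
  unfold N_sector. rewrite len_filter. apply sumR_ext. intros; apply in_sector_h.
Qed.

Lemma N_le al g x n : (N_sector al g x n <= n)%nat.
Proof.
  unfold N_sector. eapply Nat.le_trans; [apply filter_length_le|]. rewrite length_seq. lia.
Qed.

Lemma D_eq g x n al : Dx g x n al = INR (N_sector al g x n) - g * INR n.
Proof.
  unfold Dx. rewrite N_sum, <- sumR_const.
  assert (E : sumR n (fun i => h g (x i - al) - g) = sumR n (fun i => h g (x i - al)) + (-1) * sumR n (fun _ => g)).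
  { rewrite sumR_mult_l, <- sumR_plus. apply sumR_ext; intros; ring. }
  rewrite E; ring.
Qed.

Fixpoint emin (e : nat -> R) (m : nat) : R :=
  match m with O => e O | S k => Rmin (emin e k) (e (S k)) end.

Lemma emin_le e m k : (k <= m)%nat -> emin e m <= e k.
Proof.
  induction m; intros Hk; simpl.
  - replace k with O by lia. lra.
  - destruct (Nat.eq_dec k (S m)). subst. apply Rmin_r.
    eapply Rle_trans; [apply Rmin_l|]. apply IHm; lia.
Qed.

Lemma emin_pos e m : (forall k, e k > 0) -> emin e m > 0.
Proof.
  intros He; induction m; simpl; auto. unfold Rmin; destruct Rle_dec; auto.
Qed.

Lemma finval (n : nat) (gn c : R) (Nf : R -> R -> nat) (Q : R -> Prop) :
  (forall t al, (Nf t al <= n)%nat) ->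
  (forall eps, eps > 0 -> exists t al, Q al /\ (INR (Nf t al) - gn) * (INR (Nf t al) - gn) >= c - eps) ->
  exists t al, Q al /\ (INR (Nf t al) - gn) * (INR (Nf t al) - gn) >= c.
Proof.
  intros Hle Happ. apply NNPP. intros Hn.
  set (e := fun k : nat => let q := (INR k - gn) * (INR k - gn) in
                     if Rlt_dec q c then c - q else 1).
  assert (Hep : forall k, e k > 0).
  { intros k; unfold e; destruct Rlt_dec; lra. }
  set (ep := emin e n).
  assert (Hp : ep > 0) by (apply emin_pos; auto).
  destruct (Happ (ep / 2) ltac:(lra)) as [t [al [HQ Hq]]].
  assert (Hk := emin_le e n _ (Hle t al)). fold ep in Hk.
  unfold e in Hk. destruct Rlt_dec.
  - lra.
  - apply Hn. exists t, al. split; auto. lra.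
Qed.

Lemma main1 (n : nat) (v s : nat -> R) (g : R)
  (hv : forall i j, (i < n)%nat -> (j < n)%nat -> i <> j -> v i <> v j)
  (hg : 0 <= g <= 1) :
  exists t al, 0 <= al /\ al <= 1 /\
     Rabs (INR (N_sector al g (fun i => s i + v i * t) n) - g * INR n)
       >= sqrt ((g - g ^ 2) * INR n).
Proof.
  destruct (finval n (g * INR n) ((g - g * g) * INR n)
     (fun t al => N_sector al g (fun i => s i + v i * t) n) (fun al => 0 <= al <= 1)) as [t [al [Hal Hq]]].
  - intros; apply N_le.
  - intros eps He.
    destruct (ex_t g hg n s v (eps / 2) hv ltac:(lra)) as [t Ht].
    destruct (ex_alpha g hg (fun i => s i + v i * t) n (eps / 2) ltac:(lra)) as [al [Hal Ha]].
    exists t, al. split; auto. rewrite <- D_eq. lra.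
  - exists t, al. split; [lra|split;[lra|]].
    apply Rle_ge. rewrite <- sqrt_Rsqr_abs. apply sqrt_le_1_alt. unfold Rsqr.
    replace (g ^ 2) with (g * g) by ring. lra.
Qed.

Lemma ind_S_val al f : 0 <= f < 1 -> 0 <= al <= 1 ->
  (if in_sector al (1/2) f then 1 else 0) =
  (if Rle_dec al f then (if Rle_dec (f - al) (1/2) then 1 else 0)
   else (if Rle_dec (f - al + 1) (1/2) then 1 else 0)).
Proof.
  intros Hf Hal. unfold in_sector.
  destruct (Rle_dec 0 f); [|lra]. destruct (Rle_dec f 1); [|lra].
  destruct (Rle_dec al f).
  - rewrite frac_id by lra. destruct Rle_dec; reflexivity.
  - rewrite frac_neg by lra. destruct Rle_dec; reflexivity.
Qed.

Definition cind (a b f : R) : R :=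
  if (if Rle_dec a f then if Rle_dec f b then true else false else false) then 1 else 0.

Lemma count_sum a b x n : INR (count_in a b x n) = sumR n (fun i => cind a b (frac (x i))).
Proof. unfold count_in. rewrite len_filter. reflexivity. Qed.

Lemma sq_half n : sqrt ((1/2 - (1/2) ^ 2) * INR n) = sqrt (INR n) / 2.
Proof.
  replace ((1/2 - (1/2) ^ 2) * INR n) with (Rsqr (1/2) * INR n) by (unfold Rsqr; field).
  rewrite sqrt_mult by (try apply Rle_0_sqr; apply pos_INR).
  rewrite sqrt_Rsqr by lra. field.
Qed.

Lemma main2 n (x : nat -> R) al :
  0 <= al <= 1 ->
  Rabs (INR (N_sector al (1/2) x n) - 1/2 * INR n) >= sqrt (INR n) / 2 ->
  forall B, is_bias x n B -> B >= sqrt (INR n) / 2.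
Proof.
  intros Hal Hdev B [HB _].
  set (s0 := sqrt (INR n) / 2) in *.
  set (N := INR (N_sector al (1/2) x n)) in *.
  assert (HN : N = sumR n (fun i => if in_sector al (1/2) (frac (x i)) then 1 else 0))
    by (unfold N, N_sector; apply len_filter).
  assert (Hn0 : 0 <= INR n) by apply pos_INR.
  assert (HnN : INR n - N = sumR n (fun i => 1 - (if in_sector al (1/2) (frac (x i)) then 1 else 0))).
  { rewrite HN, <- (Rmult_1_l (INR n)), <- sumR_const.
    assert (E : sumR n (fun i => 1 - (if in_sector al (1/2) (frac (x i)) then 1 else 0)) =
      sumR n (fun _ => 1) + (-1) * sumR n (fun i => if in_sector al (1/2) (frac (x i)) then 1 else 0)).
    { rewrite sumR_mult_l, <- sumR_plus. apply sumR_ext; intros; ring. }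
    rewrite E; ring. }
  destruct (Rlt_dec al (1/2)).
  -
    assert (Hc : INR (count_in al (al + 1/2) x n) = N).
    { rewrite count_sum, HN. apply sumR_ext. intros i _.
      destruct (frac_range (x i)). rewrite ind_S_val by auto. unfold cind.
      repeat destruct Rle_dec; try reflexivity; lra. }
    apply Rle_ge. apply Rle_trans with (Rabs (INR (count_in al (al + 1/2) x n) - INR n * (al + 1/2 - al))).
    + rewrite Hc. replace (INR n * (al + 1/2 - al)) with (1/2 * INR n) by ring. lra.
    + apply HB. exists al, (al + 1/2). repeat split; lra.
  - destruct (Rle_dec N (1/2 * INR n)).
    + assert (Hc : INR (count_in (al - 1/2) al x n) >= INR n - N).
      { rewrite count_sum, HnN. apply Rle_ge, sumR_le. intros i _.
        destruct (frac_range (x i)). rewrite ind_S_val by auto. unfold cind.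
        repeat destruct Rle_dec; lra. }
      apply Rle_ge. apply Rle_trans with (Rabs (INR (count_in (al - 1/2) al x n) - INR n * (al - (al - 1/2)))).
      * rewrite Rabs_left1 in Hdev by lra.
        eapply Rle_trans; [|apply Rle_abs]. lra.
      * apply HB. exists (al - 1/2), al. repeat split; lra.
    + rewrite Rabs_right in Hdev by lra.
      assert (Heta : forall eta, 0 < eta <= 1/4 -> B >= s0 - 2 * INR n * eta).
      { intros eta He.
        assert (Hc : INR (count_in (al - 1/2 + eta) (al - eta) x n) <= INR n - N).
        { rewrite count_sum, HnN. apply sumR_le. intros i _.
          destruct (frac_range (x i)). rewrite ind_S_val by auto. unfold cind.
          repeat destruct Rle_dec; lra. }
        apply Rle_ge. apply Rle_trans with (Rabs (INR (count_in (al - 1/2 + eta) (al - eta) x n) - INR n * (al - eta - (al - 1/2 + eta)))).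
        * rewrite Rabs_minus_sym. eapply Rle_trans; [|apply Rle_abs]. nra.
        * apply HB. exists (al - 1/2 + eta), (al - eta). repeat split; lra. }
      apply Rnot_lt_ge. intros Hlt.
      set (eta := Rmin (1/4) ((s0 - B) / (4 * (INR n + 1)))).
      assert (He1 : 0 < eta).
      { unfold eta, Rmin; destruct Rle_dec; [lra|]. apply Rdiv_lt_0_compat; lra. }
      assert (He2 : eta <= 1/4) by (unfold eta; apply Rmin_l).
      assert (He3 : eta * (4 * (INR n + 1)) <= s0 - B).
      { assert (Hm : eta <= (s0 - B) / (4 * (INR n + 1))) by (unfold eta; apply Rmin_r).
        apply Rmult_le_compat_r with (r := 4 * (INR n + 1)) in Hm; [|lra].
        unfold Rdiv in Hm. rewrite Rmult_assoc, Rinv_l in Hm by lra. lra. }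
      specialize (Heta eta (conj He1 He2)). nra.
Qed.

Theorem theorem3p2 (n : nat) (v s : nat -> R) (gamma : R)
  (hv : forall i j, (i < n)%nat -> (j < n)%nat -> i <> j -> v i <> v j)
  (hs : forall i, (i < n)%nat -> 0 <= s i /\ s i < 1)
  (hg : 0 <= gamma /\ gamma <= 1) :
  (exists t alpha, 0 <= alpha /\ alpha <= 1 /\
     Rabs (INR (N_sector alpha gamma (fun i => s i + v i * t) n) - gamma * INR n)
       >= sqrt ((gamma - gamma ^ 2) * INR n))
  /\
  (exists t, forall B, is_bias (fun i => s i + v i * t) n B -> B >= sqrt (INR n) / 2).
Proof.
  split.
  - apply main1; auto.
  - destruct (main1 n v s (1/2) hv ltac:(lra)) as [t [al [H1 [H2 H3]]]].
    exists t. apply (main2 n _ al); [lra|]. rewrite <- sq_half. exact H3.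
Qed.
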